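(* Let $k\ge2$, $n\ge1$ be integers, let $\bar{\mathcal{P}}\in\mathbb{R}^{[k,n]}$ be a columnwise-substochastic tensor, $\mathbf{v}\in\mathbb{R}^n$ a stochastic vector and $\alpha\in[0,1)$. Define the tensor $\mathcal{P}\in\mathbb{R}^{[k,n]}$ by $p_{ii_2\dots i_k}:=\bar p_{ii_2\dots i_k}+v_i\left(1-\sum_{\ell=1}^n\bar p_{\ell i_2\dots i_k}\right)$. If $\mathbf{x}$ solves the MPR problem $$\mathbf{x}=\alpha\mathcal{P}\mathbf{x}^{k-1}+(1-\alpha)\mathbf{v},\quad\mathbf{x}\in\mathbb{R}^n_+,\quad\mathbf{e}^T\mathbf{x}=1,$$ then $\mathbf{y}:=\left(1-\alpha\mathbf{e}^T(\bar{\mathcal{P}}\mathbf{x}^{k-1})\right)^{-\frac{1}{k-1}}\mathbf{x}$ is a nonnegative solution of the MLPPR system $(\mathbf{e}^T\mathbf{y})^{k-2}\mathbf{y}-\alpha\bar{\mathcal{P}}\mathbf{y}^{k-1}=\mathbf{v}$.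
   Context: For $\mathcal{P}\in\mathbb{R}^{[k,n]}$ (real tensors of order $k$, dimension $n$) and $\mathbf{y}\in\mathbb{R}^n$, $(\mathcal{P}\mathbf{y}^{k-1})_i=\sum_{i_2,\dots,i_k}p_{i i_2\dots i_k}y_{i_2}\cdots y_{i_k}$. $\bar{\mathcal{P}}$ is columnwise-substochastic if its entries are nonnegative and $\sum_{i}\bar p_{i i_2\dots i_k}\le1$ for all $i_2,\dots,i_k$. $\mathbf{e}$ is the all-ones vector; a stochastic vector is nonnegative with entries summing to $1$. The tensor $\mathcal{P}$ (the ''dangling correction'' $\mathcal{P}=\bar{\mathcal{P}}+\mathbf{v}\circ(\mathbf{e}^{\circ(k-1)}-\bar{\mathcal{P}}\bar\times_1\mathbf{e})$) is columnwise-stochastic. *)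

(* Defs.v *)
From HB Require Import structures.
From mathcomp Require Import all_boot all_order all_algebra.
From mathcomp Require Import all_classical all_reals.
From mathcomp Require Import exp.
Set Implicit Arguments. Unset Strict Implicit. Unset Printing Implicit Defensive.
Import Order.TTheory GRing.Theory Num.Theory.
Local Open Scope ring_scope.

Definition idx (k n : nat) := {ffun 'I_k.-1 -> 'I_n}.

(* A real tensor P in R^{[k,n]}: entry p_{i i_2 ... i_k} = P i f, f = (i_2,...,i_k). *)
Definition tensor (R : Type) (k n : nat) := 'I_n -> idx k n -> R.

Definition tapply (R : ringType) (k n : nat) (P : tensor R k n) (y : 'I_n -> R)
  : 'I_n -> R :=
  fun i => \sum_(f : idx k n) P i f * \prod_(j < k.-1) y (f j).

Definition col_substochastic (R : numDomainType) (k n : nat) (P : tensor R k n) :=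
  (forall i f, 0 <= P i f) /\ (forall f, \sum_(i < n) P i f <= 1).

Definition stochastic_vec (R : numDomainType) (n : nat) (v : 'I_n -> R) :=
  (forall i, 0 <= v i) /\ \sum_(i < n) v i = 1.

Definition dangling (R : ringType) (k n : nat) (Pb : tensor R k n) (v : 'I_n -> R)
  : tensor R k n :=
  fun i f => Pb i f + v i * (1 - \sum_(l < n) Pb l f).

(* Main.v *)
Require Import Defs.
From HB Require Import structures.
From mathcomp Require Import all_boot all_order all_algebra.
From mathcomp Require Import all_classical all_reals.
From mathcomp Require Import exp.
From mathcomp Require Import ring.
Import Order.TTheory GRing.Theory Num.Theory.
Local Open Scope ring_scope.

Lemma sum_prod_idx (R : comNzRingType) (k n : nat) (x : 'I_n -> R) :
  \sum_(f : idx k n) \prod_(j < k.-1) x (f j) = (\sum_(i < n) x i) ^+ k.-1.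
Proof.
have H := @bigA_distr_bigA R 0 1 *%R +%R _ _ (fun (j : 'I_k.-1) (i : 'I_n) => x i).
rewrite /= prodr_const card_ord in H.
by rewrite H.
Qed.

Theorem lemma3p13 (R : realType) (k n : nat) (hk : (2 <= k)%N) (hn : (1 <= n)%N)
  (Pb : tensor R k n) (v : 'I_n -> R) (alpha : R) (x : 'I_n -> R) :
  col_substochastic Pb -> stochastic_vec v -> 0 <= alpha -> alpha < 1 ->
  (forall i, x i = alpha * tapply (dangling Pb v) x i + (1 - alpha) * v i) ->
  (forall i, 0 <= x i) -> \sum_(i < n) x i = 1 ->
  let y := fun i => (1 - alpha * \sum_(l < n) tapply Pb x l) `^ (- (k.-1)%:R^-1) * x i in
  (forall i, 0 <= y i) /\
  (forall i, (\sum_(j < n) y j) ^+ (k - 2) * y i - alpha * tapply Pb y i = v i).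
Proof.
move=> [Pb0 Pb1] [v0 v1] a0 a1 fx x0 x1 y.
set s := \sum_(l < n) tapply Pb x l.
have sE : s = \sum_(f : idx k n) (\sum_(l < n) Pb l f) * \prod_(j < k.-1) x (f j).
  rewrite /s /tapply exchange_big /=; apply: eq_bigr => f _.
  by rewrite mulr_suml.
have pr0 : forall f : idx k n, 0 <= \prod_(j < k.-1) x (f j).
  by move=> f; apply: prodr_ge0 => j _.
have sp1 : \sum_(f : idx k n) \prod_(j < k.-1) x (f j) = 1.
  by rewrite sum_prod_idx x1 expr1n.
have s1 : s <= 1.
  rewrite sE -[leRHS]sp1.
  apply: ler_sum => f _; exact: ler_piMl (pr0 f) (Pb1 f).
have s0 : 0 <= s.
  rewrite sE; apply: sumr_ge0 => f _; apply: mulr_ge0 => //.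
  by apply: sumr_ge0.
set c := 1 - alpha * s.
have c0 : 0 < c.
  rewrite /c subr_gt0; apply: (le_lt_trans (y := alpha)) => //.
  by rewrite -[leRHS]mulr1; exact: ler_wpM2l.
set t := c `^ (- (k.-1)%:R^-1).
have t0 : 0 <= t by exact: powR_ge0.
have tm : t ^+ k.-1 = c^-1.
  rewrite -powR_mulrn // -powRrM mulNr mulVf ?powR_inv1 ?ltW //.
  by rewrite pnatr_eq0 -lt0n; by case: (k) hk => [|[|]].
have keyx : forall i, x i - alpha * tapply Pb x i = c * v i.
  move=> i; rewrite {1}fx /tapply /dangling.
  have -> : \sum_(f : idx k n) (Pb i f + v i * (1 - \sum_(l < n) Pb l f)) *
       \prod_(j < k.-1) x (f j) = \sum_(f : idx k n) Pb i f * \prod_(j < k.-1) x (f j)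
       + v i * (1 - s).
    have -> : 1 - s = \sum_(f : idx k n) (1 - \sum_(l < n) Pb l f) * \prod_(j < k.-1) x (f j).
      rewrite sE -{1}sp1 -sumrB; apply: eq_bigr => f _; by rewrite mulrBl mul1r.
    rewrite mulr_sumr -big_split /=.
    by apply: eq_bigr => f _; ring.
  rewrite /c; ring.
split.
  by move=> i; rewrite /y; apply: mulr_ge0.
move=> i.
have sy : \sum_(j < n) y j = t by rewrite /y -mulr_sumr x1 mulr1.
have Ty : tapply Pb y i = t ^+ k.-1 * tapply Pb x i.
  rewrite /tapply mulr_sumr; apply: eq_bigr => f _.
  rewrite /y big_split /= prodr_const card_ord; exact: mulrCA.
rewrite sy Ty tm /y.
have -> : t ^+ (k - 2) * (t * x i) = t ^+ k.-1 * x i.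
  have km : k.-1 = (k - 2).+1.
    by case: (k) hk => [|[|k']] //= _; rewrite subn2.
  by rewrite mulrA -exprSr -km.
rewrite tm.
have -> : c^-1 * x i - alpha * (c^-1 * tapply Pb x i) = c^-1 * (x i - alpha * tapply Pb x i).
  by rewrite mulrCA -mulrBr.
rewrite keyx mulrA mulVf ?mul1r //; exact: lt0r_neq0.
Qed.
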